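(* Suppose $\sigma_n\in[0,1]$ satisfies $\sigma_n\sim n^{-a}$ for some $a\in(0,1/2)$. Then almost surely there is a constant $C_\omega$ such that for all $N\ge2$, $$\max_{1\le m\le N}\max_{t\in[0,1]}\Bigl|\sum_{n=1}^{N-m}Y_{n+m}(\omega)\,Y_n(\omega)\,e(nt)\Bigr|\le C_\omega\,N^{1/2-a}\sqrt{\log N}.$$
   Context: Random setup: $(\Omega,\mathcal F,\mathbb P)$ is a probability space and $(X_n)_{n\in\mathbb N}$ are independent random variables with $\mathbb P(X_n=1)=\sigma_n$, $\mathbb P(X_n=0)=1-\sigma_n$; $Y_n=X_n-\sigma_n$. $e(t)=e^{2\pi i t}$. $u_n\sim v_n$ means $u_n/v_n$ converges to a nonzero constant. *)

(* Defs.v *)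
From Stdlib Require Import Reals List.
Open Scope R_scope.

Fixpoint rsum (f : nat -> R) (n : nat) : R :=
  match n with
  | O => 0
  | S k => rsum f k + f (S k)
  end.

(* Canonical sample space: omega n = true  <->  X_n(omega) = 1  (n >= 1;
   the coordinate 0 is unused). *)
Definition Omega := nat -> bool.

Definition X (omega : Omega) (n : nat) : R := if omega n then 1 else 0.
Definition Y (sigma : nat -> R) (omega : Omega) (n : nat) : R := X omega n - sigma n.

(* Cylinder set given by a prefix s = [b_1; ...; b_k]: omega (i+1) = b_(i+1). *)
Fixpoint in_cyl_from (j : nat) (s : list bool) (omega : Omega) : Prop :=
  match s with
  | nil => True
  | b :: s' => omega j = b /\ in_cyl_from (S j) s' omega
  end.
Definition in_cyl (s : list bool) (omega : Omega) : Prop := in_cyl_from 1 s omega.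

(* Product-Bernoulli probability of a cylinder: P(X_j = b_j, 1 <= j <= k). *)
Fixpoint cyl_prob_from (sigma : nat -> R) (j : nat) (s : list bool) : R :=
  match s with
  | nil => 1
  | b :: s' => (if b then sigma j else 1 - sigma j) * cyl_prob_from sigma (S j) s'
  end.
Definition cyl_prob (sigma : nat -> R) (s : list bool) : R := cyl_prob_from sigma 1 s.

(* A is a null set of the (completed) product measure of independent
   Bernoulli(sigma_n) variables: its Caratheodory outer measure is 0, i.e.
   for every eps > 0 it is covered by countably many cylinders of total
   probability <= eps. *)
Definition null_set (sigma : nat -> R) (A : Omega -> Prop) : Prop :=
  forall eps : R, 0 < eps ->
    exists cover : nat -> list bool,
      (forall omega, A omega -> exists j, in_cyl (cover j) omega) /\
      (forall K, sum_f_R0 (fun j => cyl_prob sigma (cover j)) K <= eps).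

Definition almost_surely (sigma : nat -> R) (P : Omega -> Prop) : Prop :=
  null_set sigma (fun omega => ~ P omega).

(* e(nt) = cos(2 pi n t) + i sin(2 pi n t); modulus of
   sum_{n=1}^{N-m} Y_{n+m} Y_n e(nt). *)
Definition corr_sum_abs (sigma : nat -> R) (omega : Omega) (N m : nat) (t : R) : R :=
  let re := rsum (fun n => Y sigma omega (n + m) * Y sigma omega n
                           * cos (2 * PI * INR n * t)) (N - m) in
  let im := rsum (fun n => Y sigma omega (n + m) * Y sigma omega n
                           * sin (2 * PI * INR n * t)) (N - m) in
  sqrt (re * re + im * im).

(* Main.v *)
Require Import Defs.
From Stdlib Require Import Reals Lra Lia List Permutation Classical ClassicalEpsilon FunctionalExtensionality Arith.
Open Scope R_scope.

Definition upd (w : Omega) (i : nat) (b : bool) : Omega :=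
  fun k => if Nat.eqb k i then b else w k.

Definition avg (sg : nat -> R) (i : nat) (f : Omega -> R) : Omega -> R :=
  fun w => sg i * f (upd w i true) + (1 - sg i) * f (upd w i false).

Fixpoint ExL (sg : nat -> R) (l : list nat) (f : Omega -> R) : Omega -> R :=
  match l with nil => f | i :: l' => avg sg i (ExL sg l' f) end.

Lemma upd_upd_same w i b c : upd (upd w i b) i c = upd w i c.
Proof. extensionality k; unfold upd; destruct (Nat.eqb k i); reflexivity. Qed.

Lemma upd_comm w i j b c : i <> j -> upd (upd w i b) j c = upd (upd w j c) i b.
Proof.
  intro H; extensionality k; unfold upd.
  destruct (Nat.eqb_spec k j), (Nat.eqb_spec k i); subst; try reflexivity; lia.
Qed.

Lemma avg_comm sg i j f : avg sg i (avg sg j f) = avg sg j (avg sg i f).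
Proof.
  extensionality w; unfold avg.
  destruct (Nat.eq_dec i j) as [->|Hij]; [reflexivity|].
  rewrite !(upd_comm _ i j) by exact Hij. ring.
Qed.

Lemma ExL_perm sg l l' f : Permutation l l' -> ExL sg l f = ExL sg l' f.
Proof.
  induction 1; simpl; try reflexivity.
  - rewrite IHPermutation; reflexivity.
  - apply avg_comm.
  - congruence.
Qed.

Lemma ExL_app sg l1 l2 f : ExL sg (l1 ++ l2) f = ExL sg l1 (ExL sg l2 f).
Proof. induction l1; simpl; congruence. Qed.

Definition indep (i : nat) (f : Omega -> R) := forall w b, f (upd w i b) = f w.

Lemma avg_indep_self sg i f : indep i f -> avg sg i f = f.
Proof. intro H; extensionality w; unfold avg; rewrite !H; ring. Qed.

Lemma avg_indep sg i j f : indep j f -> indep j (avg sg i f).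
Proof.
  intros H w b; unfold avg.
  destruct (Nat.eq_dec i j) as [->|Hij].
  - rewrite !upd_upd_same; reflexivity.
  - rewrite !(upd_comm _ j i) by lia. rewrite !H. reflexivity.
Qed.

Lemma avg_self_indep sg i f : indep i (avg sg i f).
Proof. intros w b; unfold avg; rewrite !upd_upd_same; reflexivity. Qed.

Lemma ExL_indep sg l j f : indep j f -> indep j (ExL sg l f).
Proof. induction l; simpl; intro H; [exact H|]. apply avg_indep; auto. Qed.

Lemma ExL_mul_l sg l (c f : Omega -> R) :
  (forall i, In i l -> indep i c) ->
  ExL sg l (fun w => c w * f w) = fun w => c w * ExL sg l f w.
Proof.
  induction l as [|i l IH]; simpl; intro H; [reflexivity|].
  rewrite IH by auto. extensionality w; unfold avg.
  rewrite !(H i (or_introl eq_refl)). ring.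
Qed.

Lemma ExL_const_fun sg l f : (forall i, In i l -> indep i f) -> ExL sg l f = f.
Proof.
  induction l as [|i l IH]; simpl; intro H; [reflexivity|].
  rewrite IH by auto. apply avg_indep_self; auto.
Qed.

Lemma ExL_add sg l f g :
  ExL sg l (fun w => f w + g w) = fun w => ExL sg l f w + ExL sg l g w.
Proof.
  induction l as [|i l IH]; simpl; [reflexivity|].
  rewrite IH. extensionality w; unfold avg; ring.
Qed.

Lemma ExL_scal sg l k f :
  ExL sg l (fun w => k * f w) = fun w => k * ExL sg l f w.
Proof. apply (ExL_mul_l sg l (fun _ => k)). intros; intros w b; reflexivity. Qed.

Lemma ExL_mono sg l f g :
  (forall i, In i l -> 0 <= sg i <= 1) -> (forall w, f w <= g w) ->
  forall w, ExL sg l f w <= ExL sg l g w.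
Proof.
  induction l as [|i l IH]; simpl; intros Hs Hfg w; [auto|].
  unfold avg. destruct (Hs i (or_introl eq_refl)).
  assert (A := IH (fun j Hj => Hs j (or_intror Hj)) Hfg (upd w i true)).
  assert (B := IH (fun j Hj => Hs j (or_intror Hj)) Hfg (upd w i false)).
  apply Rplus_le_compat; apply Rmult_le_compat_l; lra.
Qed.

Fixpoint lsum {A} (f : A -> R) (l : list A) : R :=
  match l with nil => 0 | x :: l' => f x + lsum f l' end.

Lemma ExL_lsum {A} sg l (F : A -> Omega -> R) ks w :
  ExL sg l (fun w => lsum (fun k => F k w) ks) w = lsum (fun k => ExL sg l (F k) w) ks.
Proof.
  revert w; induction ks as [|k ks IH]; intro w; simpl.
  - rewrite ExL_const_fun; [reflexivity|]. intros; intros v b; reflexivity.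
  - rewrite (ExL_add sg l (F k) (fun w => lsum (fun k => F k w) ks)). rewrite IH. reflexivity.
Qed.

Definition indic (P : Omega -> Prop) (w : Omega) : R :=
  if excluded_middle_informative (P w) then 1 else 0.

Fixpoint cov (P : Omega -> Prop) (j k : nat) (w : Omega) : list (list bool) :=
  match k with
  | O => if excluded_middle_informative (P w) then nil :: nil else nil
  | S k' => map (cons true) (cov P (S j) k' (upd w j true)) ++
            map (cons false) (cov P (S j) k' (upd w j false))
  end.

Lemma lsum_app {A} (f : A -> R) l1 l2 : lsum f (l1 ++ l2) = lsum f l1 + lsum f l2.
Proof. induction l1; simpl; [ring|rewrite IHl1; ring]. Qed.

Lemma lsum_map_cons sg j b L :
  lsum (cyl_prob_from sg j) (map (cons b) L) =
  (if b then sg j else 1 - sg j) * lsum (cyl_prob_from sg (S j)) L.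
Proof. induction L; simpl; [ring|rewrite IHL; ring]. Qed.

Lemma cov_prob sg P j k w :
  lsum (cyl_prob_from sg j) (cov P j k w) = ExL sg (seq j k) (indic P) w.
Proof.
  revert j w; induction k as [|k IH]; intros j w; simpl.
  - unfold indic; destruct (excluded_middle_informative (P w)); simpl; ring.
  - rewrite lsum_app, !lsum_map_cons, !IH. unfold avg. ring.
Qed.

Definition glue (w w' : Omega) (j k : nat) : Omega :=
  fun i => if andb (Nat.leb j i) (Nat.ltb i (j + k)) then w' i else w i.

Lemma cov_covers P j k w w' :
  P (glue w w' j k) -> exists s, In s (cov P j k w) /\ in_cyl_from j s w'.
Proof.
  revert j w; induction k as [|k IH]; intros j w HP; simpl.
  - assert (E : glue w w' j 0 = w).
    { extensionality i; unfold glue.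
      destruct (Nat.leb_spec j i), (Nat.ltb_spec i (j+0)); simpl; auto; lia. }
    rewrite E in HP. destruct (excluded_middle_informative (P w)); [|contradiction].
    exists nil; simpl; auto.
  - assert (E : glue w w' j (S k) = glue (upd w j (w' j)) w' (S j) k).
    { extensionality i; unfold glue, upd.
      destruct (Nat.leb_spec j i), (Nat.ltb_spec i (j + S k)),
               (Nat.leb_spec (S j) i), (Nat.ltb_spec i (S j + k)),
               (Nat.eqb_spec i j); subst; simpl; auto; lia. }
    rewrite E in HP. destruct (IH (S j) _ HP) as [s [Hin Hc]].
    exists (w' j :: s). split; [|simpl; auto].
    apply in_or_app. destruct (w' j); [left|right]; apply in_map; exact Hin.
Qed.

Lemma cyl_prob_nonneg sg j s :
  (forall n, (1 <= n)%nat -> 0 <= sg n <= 1) -> (1 <= j)%nat -> 0 <= cyl_prob_from sg j s.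
Proof.
  intros Hs; revert j; induction s as [|b s IH]; intros j Hj; simpl; [lra|].
  apply Rmult_le_pos; [destruct b; destruct (Hs j Hj); lra|apply IH; lia].
Qed.

Lemma lsum_nonneg {A} (f : A -> R) l : (forall x, 0 <= f x) -> 0 <= lsum f l.
Proof. intro H; induction l; simpl; [lra|]. specialize (H a); lra. Qed.

Lemma lsum_le {A} (f g : A -> R) l : (forall x, In x l -> f x <= g x) -> lsum f l <= lsum g l.
Proof.
  induction l; simpl; intro H; [lra|].
  apply Rplus_le_compat; auto.
Qed.

Fixpoint padl (sg : nat -> R) (j k : nat) : list bool :=
  match k with
  | O => nil
  | S k' => (if Rle_dec (sg j) (1/2) then true else false) :: padl sg (S j) k'
  end.

Lemma padl_prob sg j k :
  (forall n, (1 <= n)%nat -> 0 <= sg n <= 1) -> (1 <= j)%nat ->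
  cyl_prob_from sg j (padl sg j k) <= (1/2) ^ k.
Proof.
  intros Hs; revert j; induction k as [|k IH]; intros j Hj; simpl; [lra|].
  assert (A := IH (S j) ltac:(lia)).
  assert (B := cyl_prob_nonneg sg (S j) (padl sg (S j) k) Hs ltac:(lia)).
  destruct (Hs j Hj). destruct (Rle_dec (sg j) (1/2)).
  - apply Rmult_le_compat; lra.
  - apply Rmult_le_compat; lra.
Qed.

Lemma INR_le_pow2 k : INR k <= 2 ^ k.
Proof.
  induction k; [simpl; lra|]. rewrite S_INR. simpl pow.
  assert (1 <= 2 ^ k) by (apply pow_R1_Rle; lra). lra.
Qed.

Lemma half_pow_le k : (1 <= k)%nat -> (1/2) ^ k <= 1 / INR k.
Proof.
  intro Hk. assert (Hk' : 1 <= INR k) by (apply (le_INR 1); exact Hk).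
  replace ((1/2)^k) with (/ 2 ^ k) by (rewrite <- pow_inv; f_equal; field).
  unfold Rdiv; rewrite Rmult_1_l. apply Rinv_le_contravar; [lra|apply INR_le_pow2].
Qed.

Lemma sum_nth_le (w : list bool -> R) (l : list (list bool)) K :
  (forall s, 0 <= w s) -> (K < length l)%nat ->
  sum_f_R0 (fun j => w (nth j l nil)) K <= lsum w l.
Proof.
  intros Hw; revert K; induction l as [|x l IH]; intros K HK; simpl in HK; [lia|].
  destruct K as [|K].
  - simpl. assert (0 <= lsum w l) by (apply lsum_nonneg; auto). lra.
  - rewrite decomp_sum by lia. simpl pred. simpl nth.
    assert (A := IH K ltac:(lia)). simpl. lra.
Qed.

Lemma length_concat_blk (blk : nat -> list (list bool)) l :
  (forall N, (1 <= length (blk N))%nat) -> (length l <= length (concat (map blk l)))%nat.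
Proof.
  intro H; induction l; simpl; [lia|]. rewrite length_app. specialize (H a). lia.
Qed.

Lemma lsum_scal {A} (f : A -> R) c l : lsum (fun x => c * f x) l = c * lsum f l.
Proof. induction l; simpl; [ring|rewrite IHl; ring]. Qed.

Lemma lsum_concat {B} (w : B -> R) (blk : nat -> list B) l :
  lsum w (concat (map blk l)) = lsum (fun N => lsum w (blk N)) l.
Proof. induction l; simpl; [reflexivity|]. rewrite lsum_app, IHl; reflexivity. Qed.

Lemma telescope a k : (2 <= a)%nat ->
  lsum (fun N => 1 / (INR N * (INR N - 1))) (seq a k) = 1 / (INR a - 1) - 1 / (INR (a + k) - 1).
Proof.
  revert a; induction k as [|k IH]; intros a Ha; simpl.
  - rewrite Nat.add_0_r; ring.
  - rewrite IH by lia. replace (S a + k)%nat with (a + S k)%nat by lia.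
    rewrite S_INR. assert (2 <= INR a) by (apply (le_INR 2); lia).
    assert (2 <= INR (a + S k)) by (apply (le_INR 2); lia).
    field; lra.
Qed.

Definition w0 : Omega := fun _ => false.

Lemma cover_assembly sg (B : nat -> Omega -> Prop) N0 eps :
  (forall n, (1 <= n)%nat -> 0 <= sg n <= 1) ->
  (2 <= N0)%nat ->
  (forall N w, B N w -> B N (glue w0 w 1 N)) ->
  (forall N, (N0 <= N)%nat -> ExL sg (seq 1 N) (indic (B N)) w0 <= 72 / (INR N * (INR N - 1))) ->
  73 / (INR N0 - 1) <= eps ->
  exists cover : nat -> list bool,
    (forall w, (exists N, (N0 <= N)%nat /\ B N w) -> exists j, in_cyl (cover j) w) /\
    (forall K, sum_f_R0 (fun j => cyl_prob sg (cover j)) K <= eps).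
Proof.
  intros Hs HN0 Hglue Hprob Heps.
  set (blk := fun N => padl sg 1 (N * (N - 1)) :: cov (B N) 1 N w0).
  set (Cat := fun j => concat (map blk (seq N0 (S j)))).
  assert (Hblk : forall N, (1 <= length (blk N))%nat) by (intro; simpl; lia).
  assert (Hlen : forall j, (S j <= length (Cat j))%nat).
  { intro j. unfold Cat. eapply Nat.le_trans; [|apply length_concat_blk; exact Hblk].
    rewrite length_seq; lia. }
  assert (Hpre : forall j j', (j <= j')%nat -> exists r, Cat j' = Cat j ++ r).
  { intros j j' Hjj. exists (concat (map blk (seq (N0 + S j) (j' - j)))).
    unfold Cat. rewrite <- concat_app, <- map_app, <- seq_app.
    f_equal; f_equal; f_equal; lia. }
  assert (Hnth : forall j K, (j <= K)%nat -> nth j (Cat j) nil = nth j (Cat K) nil).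
  { intros j K HjK. destruct (Hpre j K HjK) as [r ->]. rewrite app_nth1; [reflexivity|].
    specialize (Hlen j); lia. }
  exists (fun j => nth j (Cat j) nil). split.
  - intros w [N [HN HB]].
    destruct (cov_covers (B N) 1 N w0 w (Hglue N w HB)) as [s [Hin Hc]].
    assert (Hin' : In s (blk N)) by (simpl; right; exact Hin).
    destruct (In_nth _ _ nil Hin') as [i [Hi Hni]].
    set (Cat' := concat (map blk (seq N0 (N - N0)))).
    assert (HC : Cat (N - N0)%nat = Cat' ++ blk N).
    { unfold Cat, Cat'. rewrite seq_S, map_app, concat_app. simpl.
      rewrite app_nil_r. replace (N0 + (N - N0))%nat with N by lia; reflexivity. }
    assert (HlC : (N - N0 <= length Cat')%nat).
    { unfold Cat'. eapply Nat.le_trans; [|apply length_concat_blk; exact Hblk].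
      rewrite length_seq; lia. }
    exists (length Cat' + i)%nat.
    destruct (Hpre (N - N0)%nat (length Cat' + i)%nat ltac:(lia)) as [r Hr].
    rewrite Hr, app_nth1 by (rewrite HC, length_app; lia).
    + rewrite HC, app_nth2 by lia. replace (length Cat' + i - length Cat')%nat with i by lia.
      rewrite Hni. exact Hc.
  - intro K.
    assert (E : sum_f_R0 (fun j => cyl_prob sg (nth j (Cat j) nil)) K =
                sum_f_R0 (fun j => cyl_prob sg (nth j (Cat K) nil)) K).
    { apply sum_eq. intros i Hi. rewrite (Hnth i K) by lia. reflexivity. }
    rewrite E. eapply Rle_trans.
    { apply sum_nth_le. intro s. apply cyl_prob_nonneg; auto. specialize (Hlen K); lia. }
    unfold Cat. rewrite lsum_concat.
    eapply Rle_trans.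
    { apply lsum_le with (g := fun N => 73 * (1 / (INR N * (INR N - 1)))).
      intros N HN. apply in_seq in HN.
      assert (HNN : (N0 <= N)%nat) by lia.
      assert (H2 : 2 <= INR N) by (apply (le_INR 2); lia).
      unfold blk; simpl. fold (cyl_prob sg (padl sg 1 (N * (N - 1)))).
      assert (P1 : cyl_prob sg (padl sg 1 (N * (N - 1))) <= 1 / (INR N * (INR N - 1))).
      { eapply Rle_trans; [apply padl_prob; auto|].
        rewrite <- (Rmult_1_r (INR N - 1)).
        replace (INR N * ((INR N - 1) * 1)) with (INR (N * (N - 1))).
        - apply half_pow_le. apply (Nat.le_trans 1 (1*1)); [lia|apply Nat.mul_le_mono; lia].
        - rewrite mult_INR, minus_INR by lia. simpl. ring. }
      assert (P2 := Hprob N HNN). unfold cyl_prob in P2 |- *.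
      rewrite cov_prob.
      replace (72 / (INR N * (INR N - 1))) with (72 * (1 / (INR N * (INR N - 1)))) in P2
        by (field; lra).
      unfold cyl_prob in P1. lra. }
    rewrite lsum_scal, telescope by lia.
    assert (2 <= INR N0) by (apply (le_INR 2); lia).
    assert (2 <= INR (N0 + S K)) by (apply (le_INR 2); lia).
    assert (0 < 1 / (INR (N0 + S K) - 1)) by (apply Rdiv_lt_0_compat; lra).
    replace (73 / (INR N0 - 1)) with (73 * (1 / (INR N0 - 1))) in Heps by (field; lra).
    lra.
Qed.

Fixpoint lprod {A} (f : A -> R) (l : list A) : R :=
  match l with nil => 1 | x :: l' => f x * lprod f l' end.

Definition flat (m : nat) (ps : list nat) : list nat :=
  concat (map (fun n => n :: (n + m)%nat :: nil) ps).

Definition gterm (sg : nat -> R) (th : R) (d : nat -> R) (m n : nat) (w : Omega) : R :=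
  exp (th * (d n * Y sg w (n + m) * Y sg w n)).

Lemma Y_upd_other sg w i b k : k <> i -> Y sg (upd w i b) k = Y sg w k.
Proof. intro H; unfold Y, X, upd. destruct (Nat.eqb_spec k i); [lia|reflexivity]. Qed.

Lemma Y_upd_same sg w i b : Y sg (upd w i b) i = (if b then 1 else 0) - sg i.
Proof. unfold Y, X, upd. rewrite Nat.eqb_refl. reflexivity. Qed.

Lemma gterm_indep sg th d m n i : i <> n -> i <> (n + m)%nat -> indep i (gterm sg th d m n).
Proof.
  intros H1 H2 w b; unfold gterm. rewrite !Y_upd_other by lia. reflexivity.
Qed.

Lemma lprod_indep sg th d m ps i : ~ In i (flat m ps) ->
  indep i (fun w => lprod (fun n => gterm sg th d m n w) ps).
Proof.
  induction ps as [|n ps IH]; intros Hi w b; simpl; [reflexivity|].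
  assert (Hi' : ~ In i (flat m ps)) by (intro; apply Hi; unfold flat; simpl; tauto).
  unfold flat in Hi; simpl in Hi.
  rewrite gterm_indep by (intro; subst; tauto). rewrite IH; [reflexivity|exact Hi'].
Qed.

Lemma Rabs_le_inv x b : Rabs x <= b -> - b <= x <= b.
Proof. unfold Rabs; destruct (Rcase_abs x); intro; lra. Qed.

Lemma exp_quad x : Rabs x <= 1/2 -> exp x <= 1 + x + 2 * x ^ 2.
Proof.
  intro H. apply Rabs_le_inv in H.
  assert (A := exp_ineq1_le (- x)).
  assert (B : exp x * exp (- x) = 1) by (rewrite <- exp_plus; replace (x + - x) with 0 by ring; apply exp_0).
  assert (Hp : 0 < exp x) by apply exp_pos.
  assert (C : exp x * (1 + - x) <= 1) by (rewrite <- B; apply Rmult_le_compat_l; lra).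
  assert (D : (1 + x + 2 * x ^ 2) * (1 - x) >= 1) by nra.
  nra.
Qed.

Lemma pair_real s u d th :
  0 <= s <= 1 -> 0 <= u <= 1 -> Rabs d <= 1 -> 0 <= th <= 1/2 ->
  s * (u * exp (th * (d * (1 - u) * (1 - s))) + (1 - u) * exp (th * (d * (0 - u) * (1 - s)))) +
  (1 - s) * (u * exp (th * (d * (1 - u) * (0 - s))) + (1 - u) * exp (th * (d * (0 - u) * (0 - s))))
  <= exp (2 * th ^ 2 * s * u).
Proof.
  intros Hs Hu Hd Ht. apply Rabs_le_inv in Hd.
  assert (Hb : forall y z, Rabs y <= 1 -> Rabs z <= 1 -> Rabs (th * (d * z * y)) <= 1/2).
  { intros y z Hy Hz. rewrite !Rabs_mult. rewrite (Rabs_right th) by lra.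
    assert (Rabs d <= 1) by (apply Rabs_le; lra).
    assert (0 <= Rabs d) by apply Rabs_pos. assert (0 <= Rabs y) by apply Rabs_pos.
    assert (0 <= Rabs z) by apply Rabs_pos.
    assert (Rabs d * Rabs z * Rabs y <= 1).
    { assert (Rabs d * Rabs z <= 1) by nra. nra. }
    nra. }
  assert (R1 : Rabs (1 - u) <= 1) by (apply Rabs_le; lra).
  assert (R2 : Rabs (0 - u) <= 1) by (apply Rabs_le; lra).
  assert (R3 : Rabs (1 - s) <= 1) by (apply Rabs_le; lra).
  assert (R4 : Rabs (0 - s) <= 1) by (apply Rabs_le; lra).
  assert (E1 := exp_quad _ (Hb _ _ R3 R1)).
  assert (E2 := exp_quad _ (Hb _ _ R3 R2)).
  assert (E3 := exp_quad _ (Hb _ _ R4 R1)).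
  assert (E4 := exp_quad _ (Hb _ _ R4 R2)).
  set (e1 := exp (th * (d * (1 - u) * (1 - s)))) in *.
  set (e2 := exp (th * (d * (0 - u) * (1 - s)))) in *.
  set (e3 := exp (th * (d * (1 - u) * (0 - s)))) in *.
  set (e4 := exp (th * (d * (0 - u) * (0 - s)))) in *.
  eapply Rle_trans with
    (s * (u * (1 + th * (d * (1 - u) * (1 - s)) + 2 * (th * (d * (1 - u) * (1 - s))) ^ 2) +
          (1 - u) * (1 + th * (d * (0 - u) * (1 - s)) + 2 * (th * (d * (0 - u) * (1 - s))) ^ 2)) +
     (1 - s) * (u * (1 + th * (d * (1 - u) * (0 - s)) + 2 * (th * (d * (1 - u) * (0 - s))) ^ 2) +
          (1 - u) * (1 + th * (d * (0 - u) * (0 - s)) + 2 * (th * (d * (0 - u) * (0 - s))) ^ 2))).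
  { apply Rplus_le_compat; apply Rmult_le_compat_l; try lra;
      apply Rplus_le_compat; apply Rmult_le_compat_l; lra. }
  eapply Rle_trans; [|apply exp_ineq1_le].
  replace (s * (u * (1 + th * (d * (1 - u) * (1 - s)) + 2 * (th * (d * (1 - u) * (1 - s))) ^ 2) +
          (1 - u) * (1 + th * (d * (0 - u) * (1 - s)) + 2 * (th * (d * (0 - u) * (1 - s))) ^ 2)) +
     (1 - s) * (u * (1 + th * (d * (1 - u) * (0 - s)) + 2 * (th * (d * (1 - u) * (0 - s))) ^ 2) +
          (1 - u) * (1 + th * (d * (0 - u) * (0 - s)) + 2 * (th * (d * (0 - u) * (0 - s))) ^ 2)))
    with (1 + 2 * th ^ 2 * s * u * (d ^ 2 * (1 - u) * (1 - s))) by ring.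
  assert (0 <= d ^ 2 <= 1) by nra.
  assert (0 <= (1 - u) * (1 - s) <= 1) by nra.
  assert (0 <= d ^ 2 * (1 - u) * (1 - s) <= 1) by nra.
  assert (0 <= 2 * th ^ 2 * s * u) by (apply Rmult_le_pos; [apply Rmult_le_pos|]; nra).
  nra.
Qed.

Lemma pair_bound sg th d m n w :
  (forall k, (1 <= k)%nat -> 0 <= sg k <= 1) -> (1 <= m)%nat -> (1 <= n)%nat ->
  Rabs (d n) <= 1 -> 0 <= th <= 1/2 ->
  ExL sg (n :: (n + m)%nat :: nil) (gterm sg th d m n) w <= exp (2 * th ^ 2 * sg n * sg (n + m)%nat).
Proof.
  intros Hs Hm Hn Hd Ht. unfold ExL, avg, gterm.
  assert (E : forall b c, Y sg (upd (upd w n b) (n + m) c) n = (if b then 1 else 0) - sg n).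
  { intros. rewrite Y_upd_other by lia. apply Y_upd_same. }
  rewrite !E, !Y_upd_same.
  apply pair_real; auto; apply Hs; lia.
Qed.

Lemma ExL_nonneg sg l f : (forall i, In i l -> 0 <= sg i <= 1) -> (forall w, 0 <= f w) ->
  forall w, 0 <= ExL sg l f w.
Proof.
  intros Hs Hf w. assert (A := ExL_mono sg l (fun _ => 0) f Hs Hf w).
  rewrite ExL_const_fun in A; [exact A|]. intros i _ v b; reflexivity.
Qed.

Lemma lprod_nonneg {A} (f : A -> R) l : (forall x, 0 <= f x) -> 0 <= lprod f l.
Proof. intro H; induction l; simpl; [lra|]. apply Rmult_le_pos; auto. Qed.

Lemma block_bound sg th d m ps w :
  (forall k, (1 <= k)%nat -> 0 <= sg k <= 1) -> (1 <= m)%nat ->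
  (forall n, In n ps -> (1 <= n)%nat /\ Rabs (d n) <= 1) -> 0 <= th <= 1/2 ->
  NoDup (flat m ps) ->
  ExL sg (flat m ps) (fun w => lprod (fun n => gterm sg th d m n w) ps) w <=
  lprod (fun n => exp (2 * th ^ 2 * sg n * sg (n + m)%nat)) ps.
Proof.
  intros Hs Hm; revert w; induction ps as [|n ps IH]; intros w Hps Ht Hnd.
  - simpl. lra.
  - cbn [lprod].
    assert (Hn := Hps n (or_introl eq_refl)).
    assert (Hnd' := Hnd). unfold flat in Hnd'; simpl in Hnd'. fold (flat m ps) in Hnd'.
    inversion Hnd' as [|? ? Hn1 Hnd1]; subst. inversion Hnd1 as [|? ? Hn2 Hnd2]; subst.
    assert (Hsl : forall i, In i (flat m ps) -> 0 <= sg i <= 1).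
    { intros i Hi. apply Hs. unfold flat in Hi. apply in_concat in Hi.
      destruct Hi as [l [Hl Hil]]. apply in_map_iff in Hl. destruct Hl as [k [<- Hk]].
      destruct (Hps k (or_intror Hk)). simpl in Hil. lia. }
    change (flat m (n :: ps)) with ((n :: (n + m)%nat :: nil) ++ flat m ps).
    rewrite ExL_app.
    rewrite (ExL_mul_l sg (flat m ps) (gterm sg th d m n)).
    2: { intros i Hi. apply gterm_indep; intro; subst; simpl in Hn1; tauto. }
    set (H := ExL sg (flat m ps) (fun w => lprod (fun n => gterm sg th d m n w) ps)).
    assert (HH : forall i, In i (n :: (n + m)%nat :: nil) -> indep i H).
    { intros i Hi. apply ExL_indep. apply lprod_indep.
      simpl in Hi. destruct Hi as [<-|[<-|[]]]; [|exact Hn2].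
      intro Hc; apply Hn1; simpl; tauto. }
    replace (fun w => gterm sg th d m n w * H w) with (fun w => H w * gterm sg th d m n w)
      by (extensionality v; ring).
    rewrite (ExL_mul_l sg _ H (fun w => gterm sg th d m n w)) by exact HH.
    rewrite (Rmult_comm (exp _)).
    assert (B1 : 0 <= H w <= lprod (fun n => exp (2 * th ^ 2 * sg n * sg (n + m)%nat)) ps).
    { split.
      - apply ExL_nonneg; [exact Hsl|]. intro; apply lprod_nonneg; intro; unfold gterm; apply Rlt_le, exp_pos.
      - apply IH; auto. intros k Hk; apply Hps; simpl; auto. }
    assert (B2 := pair_bound sg th d m n w Hs Hm (proj1 Hn) (proj2 Hn) Ht).
    assert (B3 : 0 <= ExL sg (n :: (n + m)%nat :: nil) (gterm sg th d m n) w).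
    { apply ExL_nonneg; [|intro; unfold gterm; apply Rlt_le, exp_pos].
      intros i Hi; simpl in Hi; apply Hs; destruct Hn as [Hn0 _]; destruct Hi as [<-|[<-|[]]]; lia. }
    change (fun w0 : Omega => gterm sg th d m n w0) with (gterm sg th d m n).
    apply Rmult_le_compat; lra.
Qed.

Lemma inb_iff x l : existsb (Nat.eqb x) l = true <-> In x l.
Proof.
  rewrite existsb_exists. split.
  - intros [y [Hy E]]. apply Nat.eqb_eq in E; subst; exact Hy.
  - intro H; exists x; split; [exact H|apply Nat.eqb_refl].
Qed.

Lemma exp_lsum_lprod th (F : nat -> R) ps :
  exp (th * lsum F ps) = lprod (fun n => exp (th * F n)) ps.
Proof.
  induction ps; simpl.
  - rewrite Rmult_0_r; apply exp_0.
  - rewrite <- IHps, <- exp_plus. f_equal; ring.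
Qed.

Lemma event_exp_bound sg th d m ps N w :
  (forall k, (1 <= k)%nat -> 0 <= sg k <= 1) -> (1 <= m)%nat ->
  (forall n, In n ps -> (1 <= n)%nat /\ (n + m <= N)%nat /\ Rabs (d n) <= 1) ->
  0 <= th <= 1/2 -> NoDup (flat m ps) ->
  ExL sg (seq 1 N) (fun w => exp (th * lsum (fun n => d n * Y sg w (n + m) * Y sg w n) ps)) w
  <= exp (2 * th ^ 2 * lsum (fun n => sg n * sg (n + m)%nat) ps).
Proof.
  intros Hs Hm Hps Ht Hnd.
  assert (EF : (fun w => exp (th * lsum (fun n => d n * Y sg w (n + m) * Y sg w n) ps)) =
               (fun w => lprod (fun n => gterm sg th d m n w) ps)).
  { extensionality v. rewrite exp_lsum_lprod. reflexivity. }
  rewrite EF.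
  set (rest := filter (fun i => negb (existsb (Nat.eqb i) (flat m ps))) (seq 1 N)).
  assert (Hflat : forall x, In x (flat m ps) -> (1 <= x <= N)%nat).
  { intros x Hx. unfold flat in Hx. apply in_concat in Hx.
    destruct Hx as [l [Hl Hil]]. apply in_map_iff in Hl. destruct Hl as [k [<- Hk]].
    destruct (Hps k Hk) as [H1 [H2 _]]. simpl in Hil. lia. }
  assert (HP : Permutation (seq 1 N) (flat m ps ++ rest)).
  { apply NoDup_Permutation.
    - apply seq_NoDup.
    - apply NoDup_app; [exact Hnd| apply NoDup_filter, seq_NoDup|].
      intros a Ha Hr. unfold rest in Hr. apply filter_In in Hr. destruct Hr as [_ Hr].
      apply Bool.negb_true_iff in Hr. rewrite (proj2 (inb_iff a _) Ha) in Hr. discriminate.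
    - intro x. rewrite in_app_iff, in_seq. split.
      + intro Hx. destruct (existsb (Nat.eqb x) (flat m ps)) eqn:E.
        * left; apply inb_iff; exact E.
        * right. unfold rest. apply filter_In. split; [apply in_seq; lia|rewrite E; reflexivity].
      + intros [Hx|Hx]; [apply Hflat in Hx; lia|].
        unfold rest in Hx; apply filter_In in Hx; destruct Hx as [Hx _]; apply in_seq in Hx; lia. }
  rewrite (ExL_perm sg _ _ _ HP), ExL_app.
  rewrite (ExL_const_fun sg rest).
  2: { intros i Hi. apply lprod_indep. unfold rest in Hi. apply filter_In in Hi.
       destruct Hi as [_ Hi]. apply Bool.negb_true_iff in Hi. intro Hc.
       rewrite (proj2 (inb_iff i _) Hc) in Hi. discriminate. }
  eapply Rle_trans.
  { apply block_bound; auto. intros n Hn; destruct (Hps n Hn) as [A [_ C]]; auto. }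
  rewrite exp_lsum_lprod. right. clear.
  induction ps; cbn [lprod]; [reflexivity|]. rewrite IHps. f_equal; f_equal; ring.
Qed.

Lemma ln_le' x y : 0 < x -> x <= y -> ln x <= ln y.
Proof. intros H [H1|H1]; [apply Rlt_le, ln_increasing; auto|subst; lra]. Qed.

Lemma exp_le' x y : x <= y -> exp x <= exp y.
Proof. intros [H|H]; [apply Rlt_le, exp_increasing; auto|subst; lra]. Qed.

Lemma Rpower_pos' x y : 0 < Rpower x y.
Proof. unfold Rpower; apply exp_pos. Qed.

Lemma Rpower_base_anti x y e : 0 < x -> x <= y -> e <= 0 -> Rpower y e <= Rpower x e.
Proof.
  intros Hx Hxy He. unfold Rpower. apply exp_le'.
  assert (ln x <= ln y) by (apply ln_le'; auto). nra.
Qed.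

Lemma Rpower_one y : Rpower 1 y = 1.
Proof. unfold Rpower. rewrite ln_1, Rmult_0_r. apply exp_0. Qed.


Lemma pow_sum b M : 0 < b < 1 -> (1 <= M)%nat ->
  lsum (fun n => Rpower (INR n) (b - 1)) (seq 1 M) <= Rpower (INR M) b / b.
Proof.
  intros Hb HM. induction M as [|M IH]; [lia|].
  destruct (Nat.eq_dec M 0) as [->|HM0].
  - simpl. rewrite Rpower_one, Rpower_one. apply (Rmult_le_reg_l b); [lra|].
    field_simplify; lra.
  - rewrite seq_S, lsum_app. cbn [lsum]. rewrite Rplus_0_r.
    assert (IH' := IH ltac:(lia)).
    replace (1 + M)%nat with (S M) by lia.
    assert (HM1 : 1 <= INR M) by (apply (le_INR 1); lia).
    rewrite S_INR.
    assert (Hlt : INR M < INR M + 1) by lra.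
    assert (Hd : forall c, INR M <= c <= INR M + 1 ->
      derivable_pt_lim (fun x => Rpower x b) c ((fun x => b * Rpower x (b - 1)) c)).
    { intros c Hc; apply derivable_pt_lim_power; lra. }
    destruct (MVT_cor2 _ _ _ _ Hlt Hd) as [c [Hc1 Hc2]].
    assert (Hmono : Rpower (INR M + 1) (b - 1) <= Rpower c (b - 1)).
    { apply Rpower_base_anti; lra. }
    replace (INR M + 1 - INR M) with 1 in Hc1 by ring.
    assert (E : Rpower (INR M + 1) b / b = Rpower (INR M) b / b + Rpower c (b - 1)).
    { cbv beta in Hc1.
      replace (Rpower (INR M + 1) b) with (Rpower (INR M) b + b * Rpower c (b - 1)) by lra.
      field. lra. }
    rewrite E. lra.
Qed.

Lemma grid_exists G x : 0 <= x <= INR G -> exists g, (g <= G)%nat /\ Rabs (x - INR g) <= 1.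
Proof.
  revert x; induction G as [|G IH]; intros x Hx.
  - exists 0%nat. split; [lia|]. simpl in *. rewrite Rminus_0_r, Rabs_right; lra.
  - rewrite S_INR in Hx. destruct (Rle_dec x (INR G)) as [H|H].
    + destruct (IH x ltac:(lra)) as [g [Hg1 Hg2]]. exists g; split; [lia|exact Hg2].
    + exists (S G). split; [lia|]. rewrite S_INR. apply Rabs_le; lra.
Qed.

Lemma cos_lip x y : Rabs (cos x - cos y) <= Rabs (x - y).
Proof.
  destruct (Rtotal_order x y) as [H|[H|H]].
  - destruct (MVT_cor2 cos (fun z => - sin z) x y H) as [c [Hc _]].
    { intros; apply derivable_pt_lim_cos. }
    replace (cos x - cos y) with (- (cos y - cos x)) by ring.
    rewrite Rabs_Ropp, Hc, Rabs_mult. rewrite (Rabs_minus_sym x y).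
    assert (Rabs (- sin c) <= 1) by (rewrite Rabs_Ropp; apply Rabs_le; apply SIN_bound).
    assert (0 <= Rabs (y - x)) by apply Rabs_pos. nra.
  - subst. replace (cos y - cos y) with 0 by ring. replace (y - y) with 0 by ring. lra.
  - destruct (MVT_cor2 cos (fun z => - sin z) y x H) as [c [Hc _]].
    { intros; apply derivable_pt_lim_cos. }
    rewrite Hc, Rabs_mult.
    assert (Rabs (- sin c) <= 1) by (rewrite Rabs_Ropp; apply Rabs_le; apply SIN_bound).
    assert (0 <= Rabs (x - y)) by apply Rabs_pos. nra.
Qed.

Lemma sin_lip x y : Rabs (sin x - sin y) <= Rabs (x - y).
Proof.
  destruct (Rtotal_order x y) as [H|[H|H]].
  - destruct (MVT_cor2 sin cos x y H) as [c [Hc _]].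
    { intros; apply derivable_pt_lim_sin. }
    replace (sin x - sin y) with (- (sin y - sin x)) by ring.
    rewrite Rabs_Ropp, Hc, Rabs_mult. rewrite (Rabs_minus_sym x y).
    assert (Rabs (cos c) <= 1) by (apply Rabs_le; apply COS_bound).
    assert (0 <= Rabs (y - x)) by apply Rabs_pos. nra.
  - subst. replace (sin y - sin y) with 0 by ring. replace (y - y) with 0 by ring. lra.
  - destruct (MVT_cor2 sin cos y x H) as [c [Hc _]].
    { intros; apply derivable_pt_lim_sin. }
    rewrite Hc, Rabs_mult.
    assert (Rabs (cos c) <= 1) by (apply Rabs_le; apply COS_bound).
    assert (0 <= Rabs (x - y)) by apply Rabs_pos. nra.
Qed.

Lemma rsum_lsum f M : rsum f M = lsum f (seq 1 M).
Proof.
  induction M; [reflexivity|]. simpl rsum. rewrite seq_S, lsum_app, IHM. simpl.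
  replace (1 + M)%nat with (S M) by lia. ring.
Qed.

Lemma rsum_diff f g M c :
  (forall n, (1 <= n <= M)%nat -> Rabs (f n - g n) <= c) ->
  Rabs (rsum f M - rsum g M) <= INR M * c.
Proof.
  induction M; intro H; simpl rsum.
  - simpl. rewrite Rminus_0_r, Rabs_R0. lra.
  - rewrite S_INR.
    replace (rsum f M + f (S M) - (rsum g M + g (S M)))
      with ((rsum f M - rsum g M) + (f (S M) - g (S M))) by ring.
    eapply Rle_trans; [apply Rabs_triang|].
    assert (A := IHM (fun n Hn => H n ltac:(lia))). assert (B := H (S M) ltac:(lia)). lra.
Qed.

Lemma sqrt_sum_sq x y : sqrt (x * x + y * y) <= Rabs x + Rabs y.
Proof.
  rewrite <- (sqrt_Rsqr (Rabs x + Rabs y)) by (assert (0 <= Rabs x) by apply Rabs_pos;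
     assert (0 <= Rabs y) by apply Rabs_pos; lra).
  apply sqrt_le_1_alt. unfold Rsqr.
  assert (E1 : x * x = Rabs x * Rabs x) by (rewrite <- Rabs_mult; rewrite Rabs_right; [ring|nra]).
  assert (E2 : y * y = Rabs y * Rabs y) by (rewrite <- Rabs_mult; rewrite Rabs_right; [ring|nra]).
  assert (0 <= Rabs x) by apply Rabs_pos. assert (0 <= Rabs y) by apply Rabs_pos. nra.
Qed.

Lemma Y_bound sg w n : (forall k, (1 <= k)%nat -> 0 <= sg k <= 1) -> (1 <= n)%nat -> Rabs (Y sg w n) <= 1.
Proof.
  intros Hs Hn. unfold Y, X. destruct (Hs n Hn). apply Rabs_le. destruct (w n); lra.
Qed.

Lemma lsum_split (g : nat -> bool) f l :
  lsum f l = lsum f (filter (fun n => Bool.eqb (g n) true) l) + lsum f (filter (fun n => Bool.eqb (g n) false) l).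
Proof. induction l; simpl; [ring|]. destruct (g a); simpl; rewrite IHl; ring. Qed.

Lemma lsum_filter_le (q : nat -> bool) f l : (forall x, In x l -> 0 <= f x) -> lsum f (filter q l) <= lsum f l.
Proof.
  intro H; induction l; simpl; [lra|].
  assert (IH := IHl (fun x Hx => H x (or_intror Hx))).
  assert (H0 := H a (or_introl eq_refl)).
  destruct (q a); simpl; lra.
Qed.

Lemma lsum_ge_elem {A} (f : A -> R) l x : (forall y, 0 <= f y) -> In x l -> f x <= lsum f l.
Proof.
  intro H; induction l; simpl; intros Hx; [contradiction|].
  destruct Hx as [<-|Hx]; [assert (0 <= lsum f l) by (apply lsum_nonneg; auto); lra|].
  specialize (H a); specialize (IHl Hx); lra.
Qed.

Lemma lsum_const_le {A} (f : A -> R) l c : (forall x, In x l -> f x <= c) -> lsum f l <= INR (length l) * c.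
Proof.
  induction l; intros H; [simpl; lra|]. cbn [lsum length]. rewrite S_INR.
  assert (A1 := H a (or_introl eq_refl)). assert (A2 := IHl (fun x Hx => H x (or_intror Hx))). lra.
Qed.

Lemma lsum_ext {A} (f g : A -> R) l : (forall x, In x l -> f x = g x) -> lsum f l = lsum g l.
Proof. induction l; simpl; intros H; [reflexivity|]. rewrite H, IHl; auto. Qed.

Definition psel (m : nat) (p : bool) (M : nat) : list nat :=
  filter (fun n => Bool.eqb (Nat.even ((n - 1) / m)) p) (seq 1 M).

Lemma flat_nodup m l : (1 <= m)%nat -> NoDup l -> (forall x y, In x l -> In y l -> x <> (y + m)%nat) ->
  NoDup (flat m l).
Proof.
  intros Hm; induction l as [|n l IH]; intros Hnd Hc; simpl; [constructor|].
  unfold flat; simpl. fold (flat m l).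
  inversion Hnd as [|? ? Hn Hl]; subst.
  assert (Hin : forall z, In z (flat m l) -> In z l \/ exists y, In y l /\ z = (y + m)%nat).
  { intros z Hz. unfold flat in Hz. apply in_concat in Hz. destruct Hz as [k [Hk Hzk]].
    apply in_map_iff in Hk. destruct Hk as [y [<- Hy]]. simpl in Hzk.
    destruct Hzk as [<-|[<-|[]]]; [left; exact Hy|right; exists y; auto]. }
  constructor.
  - intros [H|H]; [lia|]. destruct (Hin n H) as [H'|[y [Hy ->]]]; [contradiction|].
    apply (Hc (y + m)%nat y); simpl; auto.
  - constructor.
    + intro H. destruct (Hin _ H) as [H'|[y [Hy Hey]]].
      * apply (Hc (n + m)%nat n); simpl; auto.
      * assert (y = n) by lia. subst. contradiction.
    + apply IH; auto. intros x y Hx Hy; apply Hc; simpl; auto.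
Qed.

Lemma psel_nodup m p M : (1 <= m)%nat -> NoDup (flat m (psel m p M)).
Proof.
  intro Hm. apply flat_nodup; auto.
  - apply NoDup_filter, seq_NoDup.
  - intros x y Hx Hy E. unfold psel in Hx, Hy. apply filter_In in Hx, Hy.
    destruct Hx as [Hx1 Hx2], Hy as [Hy1 Hy2]. apply in_seq in Hx1, Hy1.
    subst x. replace (y + m - 1)%nat with ((y - 1) + 1 * m)%nat in Hx2 by lia.
    rewrite Nat.div_add in Hx2 by lia. rewrite Nat.add_1_r, Nat.even_succ in Hx2.
    rewrite <- Nat.negb_even in Hx2.
    destruct (Nat.even ((y - 1) / m)), p; discriminate.
Qed.

Definition Tp (sg : nat -> R) (w : Omega) (m : nat) (p : bool) (d : nat -> R) (M : nat) : R :=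
  lsum (fun n => d n * Y sg w (n + m) * Y sg w n) (psel m p M).

Definition ccos (c t : R) (n : nat) : R := c * cos (2 * PI * INR n * t).
Definition csin (c t : R) (n : nat) : R := c * sin (2 * PI * INR n * t).

Definition combos (t : R) : list (bool * (nat -> R)) :=
  (true, ccos 1 t) :: (true, ccos (-1) t) :: (true, csin 1 t) :: (true, csin (-1) t) ::
  (false, ccos 1 t) :: (false, ccos (-1) t) :: (false, csin 1 t) :: (false, csin (-1) t) :: nil.

Lemma rsum_ext f g M : (forall n, (1 <= n <= M)%nat -> f n = g n) -> rsum f M = rsum g M.
Proof.
  induction M; intro H; simpl; [reflexivity|]. rewrite IHM, H; auto; [lia|].
  intros; apply H; lia.
Qed.

Lemma corr_glue sg w N m t : (m <= N)%nat ->
  corr_sum_abs sg (glue w0 w 1 N) N m t = corr_sum_abs sg w N m t.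
Proof.
  intro Hm. unfold corr_sum_abs.
  assert (HY : forall k, (1 <= k <= N)%nat -> Y sg (glue w0 w 1 N) k = Y sg w k).
  { intros k Hk. unfold Y, X, glue.
    destruct (Nat.leb_spec 1 k), (Nat.ltb_spec k (1 + N)); simpl; try reflexivity; lia. }
  rewrite (rsum_ext (fun n => Y sg (glue w0 w 1 N) (n + m) * Y sg (glue w0 w 1 N) n * cos (2 * PI * INR n * t))
                    (fun n => Y sg w (n + m) * Y sg w n * cos (2 * PI * INR n * t))).
  2: { intros n Hn. rewrite !HY by lia. reflexivity. }
  rewrite (rsum_ext (fun n => Y sg (glue w0 w 1 N) (n + m) * Y sg (glue w0 w 1 N) n * sin (2 * PI * INR n * t))
                    (fun n => Y sg w (n + m) * Y sg w n * sin (2 * PI * INR n * t))).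
  2: { intros n Hn. rewrite !HY by lia. reflexivity. }
  reflexivity.
Qed.

Lemma Tp_neg sg w m p M (f : nat -> R) :
  Tp sg w m p (fun n => -1 * f n) M = - Tp sg w m p f M.
Proof.
  unfold Tp. replace (- lsum (fun n => f n * Y sg w (n + m) * Y sg w n) (psel m p M))
    with (-1 * lsum (fun n => f n * Y sg w (n + m) * Y sg w n) (psel m p M)) by ring.
  rewrite <- lsum_scal. apply lsum_ext; intros; ring.
Qed.

Lemma Tp_one sg w m p M (f : nat -> R) :
  Tp sg w m p (fun n => 1 * f n) M = Tp sg w m p f M.
Proof. unfold Tp. apply lsum_ext; intros; ring. Qed.

Lemma rsum_split_Tp sg w m M (f : nat -> R) :
  rsum (fun n => Y sg w (n + m) * Y sg w n * f n) M =
  Tp sg w m true f M + Tp sg w m false f M.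
Proof.
  rewrite rsum_lsum. unfold Tp, psel.
  rewrite (lsum_split (fun n => Nat.even ((n - 1) / m))).
  f_equal; apply lsum_ext; intros; ring.
Qed.

Lemma abs_from_two x l : x <= l -> - x <= l -> Rabs x <= l.
Proof. intros; apply Rabs_le; lra. Qed.

Lemma det_bound sg w N m t G g lam :
  (forall k, (1 <= k)%nat -> 0 <= sg k <= 1) -> (2 <= N)%nat -> (1 <= m <= N)%nat ->
  0 <= t <= 1 -> G = (8 * N * N)%nat -> (g <= G)%nat -> Rabs (t - INR g / INR G) <= 1 / INR G ->
  (forall pd, In pd (combos (INR g / INR G)) -> Tp sg w m (fst pd) (snd pd) (N - m) <= lam) ->
  corr_sum_abs sg w N m t <= 4 * lam + 2.
Proof.
  intros Hs HN Hm Ht HG Hg Htg Hc.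
  set (tg := INR g / INR G) in *.
  assert (HN2 : 2 <= INR N) by (apply (le_INR 2); lia).
  assert (HGr : INR G = 8 * INR N * INR N) by (rewrite HG, !mult_INR; simpl; ring).
  assert (HGp : 0 < INR G) by (rewrite HGr; nra).
  assert (HMN : INR (N - m) <= INR N) by (apply le_INR; lia).
  assert (HM0 : 0 <= INR (N - m)) by apply pos_INR.
  assert (Hpi := PI_4). assert (Hpi0 := PI_RGT_0).
  assert (Lip : forall (h : R -> R), (forall x y, Rabs (h x - h y) <= Rabs (x - y)) ->
    Rabs (rsum (fun n => Y sg w (n + m) * Y sg w n * h (2 * PI * INR n * t)) (N - m)
        - rsum (fun n => Y sg w (n + m) * Y sg w n * h (2 * PI * INR n * tg)) (N - m)) <= 1).
  { intros h Hh. eapply Rle_trans; [apply (rsum_diff _ _ _ (2 * PI * INR N * (1 / INR G)))|].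
    - intros n Hn.
      replace (Y sg w (n + m) * Y sg w n * h (2 * PI * INR n * t) -
               Y sg w (n + m) * Y sg w n * h (2 * PI * INR n * tg))
        with (Y sg w (n + m) * Y sg w n * (h (2 * PI * INR n * t) - h (2 * PI * INR n * tg))) by ring.
      rewrite !Rabs_mult.
      assert (Y1 := Y_bound sg w (n + m) Hs ltac:(lia)).
      assert (Y2 := Y_bound sg w n Hs ltac:(lia)).
      assert (H1 := Hh (2 * PI * INR n * t) (2 * PI * INR n * tg)).
      replace (2 * PI * INR n * t - 2 * PI * INR n * tg) with ((2 * PI * INR n) * (t - tg)) in H1 by ring.
      rewrite Rabs_mult, (Rabs_right (2 * PI * INR n)) in H1.
      2: { assert (0 <= INR n) by apply pos_INR. nra. }
      assert (HnN : INR n <= INR N) by (apply le_INR; lia).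
      assert (0 <= INR n) by apply pos_INR.
      assert (0 <= Rabs (t - tg)) by apply Rabs_pos.
      assert (2 * PI * INR n * Rabs (t - tg) <= 2 * PI * INR N * (1 / INR G)).
      { apply Rmult_le_compat; nra. }
      assert (0 <= Rabs (Y sg w (n + m))) by apply Rabs_pos.
      assert (0 <= Rabs (Y sg w n)) by apply Rabs_pos.
      assert (0 <= Rabs (h (2 * PI * INR n * t) - h (2 * PI * INR n * tg))) by apply Rabs_pos.
      assert (Rabs (Y sg w (n + m)) * Rabs (Y sg w n) <= 1) by nra.
      nra.
    - rewrite HGr.
      replace (INR (N - m) * (2 * PI * INR N * (1 / (8 * INR N * INR N))))
        with (INR (N - m) / INR N * (PI / 4)) by (field; lra).
      assert (INR (N - m) / INR N <= 1) by (apply (Rmult_le_reg_r (INR N)); [lra|]; field_simplify; lra).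
      assert (0 <= INR (N - m) / INR N) by (unfold Rdiv; apply Rmult_le_pos; [lra|apply Rlt_le, Rinv_0_lt_compat; lra]).
      nra. }
  assert (LC := Lip cos cos_lip). assert (LS := Lip sin sin_lip).
  rewrite !rsum_split_Tp in LC, LS.
  assert (Hin : forall p d, In (p, d) (combos tg) -> Tp sg w m p d (N - m) <= lam)
    by (intros p d H; exact (Hc (p, d) H)).
  unfold combos in Hin.
  assert (C1 := Hin true (ccos 1 tg) ltac:(simpl; tauto)).
  assert (C2 := Hin true (ccos (-1) tg) ltac:(simpl; tauto)).
  assert (C3 := Hin true (csin 1 tg) ltac:(simpl; tauto)).
  assert (C4 := Hin true (csin (-1) tg) ltac:(simpl; tauto)).
  assert (C5 := Hin false (ccos 1 tg) ltac:(simpl; tauto)).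
  assert (C6 := Hin false (ccos (-1) tg) ltac:(simpl; tauto)).
  assert (C7 := Hin false (csin 1 tg) ltac:(simpl; tauto)).
  assert (C8 := Hin false (csin (-1) tg) ltac:(simpl; tauto)).
  unfold ccos, csin in *.
  rewrite (Tp_neg sg w m true (N - m) (fun n => cos (2 * PI * INR n * tg))) in C2.
  rewrite (Tp_neg sg w m true (N - m) (fun n => sin (2 * PI * INR n * tg))) in C4.
  rewrite (Tp_neg sg w m false (N - m) (fun n => cos (2 * PI * INR n * tg))) in C6.
  rewrite (Tp_neg sg w m false (N - m) (fun n => sin (2 * PI * INR n * tg))) in C8.
  rewrite !Tp_one in C1, C3, C5, C7.
  unfold corr_sum_abs; cbv zeta. rewrite !rsum_split_Tp.
  eapply Rle_trans; [apply sqrt_sum_sq|].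
  apply Rabs_le_inv in LC. apply Rabs_le_inv in LS.
  assert (A1 : Rabs (Tp sg w m true (fun n : nat => cos (2 * PI * INR n * t)) (N - m) +
       Tp sg w m false (fun n : nat => cos (2 * PI * INR n * t)) (N - m)) <= 2 * lam + 1)
    by (apply abs_from_two; lra).
  assert (A2 : Rabs (Tp sg w m true (fun n : nat => sin (2 * PI * INR n * t)) (N - m) +
       Tp sg w m false (fun n : nat => sin (2 * PI * INR n * t)) (N - m)) <= 2 * lam + 1)
    by (apply abs_from_two; lra).
  lra.
Qed.

Definition Vn (K a : R) (N : nat) : R := K ^ 2 * Rpower (INR N) (1 - 2 * a) / (1 - 2 * a).
Definition Wn (K a : R) (N : nat) : R := Vn K a N + 4 * ln (INR N).
Definition thn (K a : R) (N : nat) : R := sqrt (ln (INR N) / Wn K a N).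
Definition lamn (K a : R) (N : nat) : R := 8 * sqrt (Wn K a N * ln (INR N)).
Definition Gn (N : nat) : nat := (8 * N * N)%nat.

Definition U (sg : nat -> R) (K a : R) (N : nat) (w : Omega) : R :=
  lsum (fun m => lsum (fun g => lsum (fun pd => exp (thn K a N * (Tp sg w m (fst pd) (snd pd) (N - m) - lamn K a N)))
     (combos (INR g / INR (Gn N)))) (seq 0 (S (Gn N)))) (seq 1 N).

Definition Bset (sg : nat -> R) (K a : R) (N : nat) (w : Omega) : Prop :=
  exists m, (1 <= m <= N)%nat /\ exists t, 0 <= t <= 1 /\ 4 * lamn K a N + 2 < corr_sum_abs sg w N m t.

Lemma U_nonneg sg K a N w : 0 <= U sg K a N w.
Proof.
  unfold U. apply lsum_nonneg; intro; apply lsum_nonneg; intro; apply lsum_nonneg; intro.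
  apply Rlt_le, exp_pos.
Qed.

Lemma ind_le_U sg K a N w :
  (forall k, (1 <= k)%nat -> 0 <= sg k <= 1) -> (2 <= N)%nat ->
  indic (Bset sg K a N) w <= U sg K a N w.
Proof.
  intros Hs HN. unfold indic. destruct (excluded_middle_informative (Bset sg K a N w)) as [HB|HB];
    [|apply U_nonneg].
  destruct HB as [m [Hm [t [Ht Hc]]]].
  set (G := Gn N).
  assert (HN2 : 2 <= INR N) by (apply (le_INR 2); lia).
  assert (HGr : INR G = 8 * INR N * INR N) by (unfold G, Gn; rewrite !mult_INR; simpl; ring).
  assert (HGp : 0 < INR G) by (rewrite HGr; nra).
  destruct (grid_exists G (t * INR G)) as [g [Hg Hgt]]; [split; nra|].
  assert (Htg : Rabs (t - INR g / INR G) <= 1 / INR G).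
  { replace (t - INR g / INR G) with ((t * INR G - INR g) * / INR G) by (field; lra).
    rewrite Rabs_mult, (Rabs_right (/ INR G)) by (apply Rle_ge, Rlt_le, Rinv_0_lt_compat; lra).
    unfold Rdiv. rewrite Rmult_1_l. assert (0 < / INR G) by (apply Rinv_0_lt_compat; lra). nra. }
  destruct (classic (forall pd, In pd (combos (INR g / INR G)) ->
      Tp sg w m (fst pd) (snd pd) (N - m) <= lamn K a N)) as [Hall|Hex].
  - exfalso. assert (D := det_bound sg w N m t G g (lamn K a N) Hs HN Hm Ht eq_refl Hg Htg Hall). lra.
  - apply not_all_ex_not in Hex. destruct Hex as [pd Hpd].
    apply imply_to_and in Hpd. destruct Hpd as [Hin Hgt'].
    apply Rnot_le_lt in Hgt'.
    assert (Hth : 0 <= thn K a N) by (unfold thn; apply sqrt_pos).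
    assert (E1 : 1 <= exp (thn K a N * (Tp sg w m (fst pd) (snd pd) (N - m) - lamn K a N))).
    { rewrite <- exp_0. apply exp_le'. apply Rmult_le_pos; lra. }
    eapply Rle_trans; [exact E1|]. unfold U.
    eapply Rle_trans; [|apply (lsum_ge_elem _ _ m)].
    2: { intro; apply lsum_nonneg; intro; apply lsum_nonneg; intro; apply Rlt_le, exp_pos. }
    2: { apply in_seq; lia. }
    eapply Rle_trans; [|apply (lsum_ge_elem _ _ g)].
    2: { intro; apply lsum_nonneg; intro; apply Rlt_le, exp_pos. }
    2: { apply in_seq; lia. }
    fold G. apply (lsum_ge_elem (fun pd => exp (thn K a N * (Tp sg w m (fst pd) (snd pd) (N - m) - lamn K a N)))).
    + intro; apply Rlt_le, exp_pos.
    + exact Hin.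
Qed.

Lemma S_bound sg K a m p N :
  (forall k, (1 <= k)%nat -> 0 <= sg k <= 1) -> 0 < a < 1/2 -> 0 <= K ->
  (forall k, (1 <= k)%nat -> sg k <= K * Rpower (INR k) (- a)) ->
  (1 <= m <= N)%nat ->
  lsum (fun n => sg n * sg (n + m)%nat) (psel m p (N - m)) <= Vn K a N.
Proof.
  intros Hs Ha HK HsK Hm.
  assert (HV : 0 <= Vn K a N).
  { unfold Vn. unfold Rdiv. apply Rmult_le_pos; [apply Rmult_le_pos; [nra|apply Rlt_le, Rpower_pos']|].
    apply Rlt_le, Rinv_0_lt_compat; lra. }
  eapply Rle_trans; [apply lsum_filter_le|].
  { intros n Hn. apply in_seq in Hn. apply Rmult_le_pos; apply Hs; lia. }
  destruct (Nat.eq_dec (N - m) 0) as [E|E]; [rewrite E; simpl; exact HV|].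
  eapply Rle_trans.
  { apply (lsum_le _ (fun n => K ^ 2 * Rpower (INR n) ((1 - 2 * a) - 1))).
    intros n Hn. apply in_seq in Hn.
    assert (Hn1 : 1 <= INR n) by (apply (le_INR 1); lia).
    assert (Hnm : INR n <= INR (n + m)) by (apply le_INR; lia).
    assert (A1 := HsK n ltac:(lia)). assert (A2 := HsK (n + m)%nat ltac:(lia)).
    assert (A3 : Rpower (INR (n + m)) (- a) <= Rpower (INR n) (- a)) by (apply Rpower_base_anti; lra).
    assert (B1 := Hs n ltac:(lia)). assert (B2 := Hs (n + m)%nat ltac:(lia)).
    assert (P1 := Rpower_pos' (INR n) (- a)). assert (P2 := Rpower_pos' (INR (n + m)) (- a)).
    replace ((1 - 2 * a) - 1) with (- a + - a) by ring. rewrite Rpower_plus.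
    assert (sg (n + m)%nat <= K * Rpower (INR n) (- a)) by nra.
    assert (sg n * sg (n + m)%nat <= sg n * (K * Rpower (INR n) (- a))) by (apply Rmult_le_compat_l; lra).
    assert (sg n * (K * Rpower (INR n) (- a)) <= (K * Rpower (INR n) (- a)) * (K * Rpower (INR n) (- a)))
      by (apply Rmult_le_compat_r; nra).
    nra. }
  rewrite lsum_scal.
  assert (Hb : 0 < 1 - 2 * a < 1) by lra.
  assert (PS := pow_sum (1 - 2 * a) (N - m) Hb ltac:(lia)).
  assert (HM1 : 1 <= INR (N - m)) by (apply (le_INR 1); lia).
  assert (HMN : INR (N - m) <= INR N) by (apply le_INR; lia).
  assert (Rpower (INR (N - m)) (1 - 2 * a) <= Rpower (INR N) (1 - 2 * a)) by (apply Rle_Rpower_l; lra).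
  unfold Vn. unfold Rdiv in *.
  assert (0 < / (1 - 2 * a)) by (apply Rinv_0_lt_compat; lra).
  assert (0 <= K ^ 2) by nra.
  apply Rle_trans with (K ^ 2 * (Rpower (INR (N - m)) (1 - 2 * a) * / (1 - 2 * a))).
  - apply Rmult_le_compat_l; auto.
  - rewrite <- Rmult_assoc. apply Rmult_le_compat_r; [lra|]. apply Rmult_le_compat_l; auto.
Qed.

Lemma term_bound sg K a N m p (d : nat -> R) w :
  (forall k, (1 <= k)%nat -> 0 <= sg k <= 1) -> 0 < a < 1/2 -> 0 <= K ->
  (forall k, (1 <= k)%nat -> sg k <= K * Rpower (INR k) (- a)) ->
  (2 <= N)%nat -> (1 <= m <= N)%nat -> (forall n, Rabs (d n) <= 1) ->
  ExL sg (seq 1 N) (fun w => exp (thn K a N * (Tp sg w m p d (N - m) - lamn K a N))) w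
  <= / INR N ^ 6.
Proof.
  intros Hs Ha HK HsK HN Hm Hd.
  set (th := thn K a N). set (lam := lamn K a N).
  assert (EF : (fun w => exp (th * (Tp sg w m p d (N - m) - lam))) =
               (fun w => exp (- (th * lam)) * exp (th * Tp sg w m p d (N - m)))).
  { extensionality v. rewrite <- exp_plus. f_equal. ring. }
  rewrite EF, ExL_scal.
  assert (HN2 : 2 <= INR N) by (apply (le_INR 2); lia).
  assert (HL : 0 < ln (INR N)).
  { rewrite <- ln_1. apply ln_increasing; lra. }
  assert (HV : 0 <= Vn K a N).
  { unfold Vn. unfold Rdiv. apply Rmult_le_pos; [apply Rmult_le_pos; [nra|apply Rlt_le, Rpower_pos']|].
    apply Rlt_le, Rinv_0_lt_compat; lra. }
  assert (HW : 0 < Wn K a N) by (unfold Wn; lra).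
  assert (Hth2 : th * th = ln (INR N) / Wn K a N).
  { unfold th, thn. apply sqrt_sqrt. unfold Rdiv; apply Rmult_le_pos; [lra|apply Rlt_le, Rinv_0_lt_compat; lra]. }
  assert (Hth0 : 0 <= th) by (unfold th, thn; apply sqrt_pos).
  assert (Hth1 : th <= 1/2).
  { assert (th * th <= 1/4).
    { rewrite Hth2. apply (Rmult_le_reg_r (Wn K a N)); [lra|]. unfold Rdiv.
      rewrite Rmult_assoc, Rinv_l by lra. unfold Wn. lra. }
    nra. }
  assert (Hthl : th * lam = 8 * ln (INR N)).
  { unfold th, lam, thn, lamn.
    replace (sqrt (ln (INR N) / Wn K a N) * (8 * sqrt (Wn K a N * ln (INR N))))
      with (8 * (sqrt (ln (INR N) / Wn K a N) * sqrt (Wn K a N * ln (INR N)))) by ring.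
    rewrite <- sqrt_mult_alt.
    2: { unfold Rdiv; apply Rmult_le_pos; [lra|apply Rlt_le, Rinv_0_lt_compat; lra]. }
    replace (ln (INR N) / Wn K a N * (Wn K a N * ln (INR N))) with (Rsqr (ln (INR N)))
      by (unfold Rsqr; field; lra).
    rewrite sqrt_Rsqr by lra. reflexivity. }
  assert (EB := event_exp_bound sg th d m (psel m p (N - m)) N w Hs (proj1 Hm)).
  eapply Rle_trans.
  { apply Rmult_le_compat_l; [apply Rlt_le, exp_pos|].
    apply EB.
    - intros n Hn. unfold psel in Hn. apply filter_In in Hn. destruct Hn as [Hn _].
      apply in_seq in Hn. repeat split; try lia. apply Hd.
    - split; lra.
    - apply psel_nodup; lia. }
  rewrite <- exp_plus.
  assert (SB := S_bound sg K a m p N Hs Ha HK HsK Hm).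
  assert (E6 : / INR N ^ 6 = exp (- (6 * ln (INR N)))).
  { rewrite exp_Ropp. f_equal. rewrite <- (exp_ln (INR N)) at 1 by lra.
    rewrite <- Rpower_pow by (apply exp_pos). unfold Rpower. rewrite ln_exp. f_equal. simpl. ring. }
  rewrite E6. apply exp_le'. rewrite Hthl.
  assert (th ^ 2 * lsum (fun n => sg n * sg (n + m)%nat) (psel m p (N - m)) <= th ^ 2 * Vn K a N).
  { apply Rmult_le_compat_l; [nra|exact SB]. }
  assert (th ^ 2 * Vn K a N <= ln (INR N)).
  { replace (th ^ 2) with (th * th) by ring. rewrite Hth2. unfold Rdiv.
    apply (Rmult_le_reg_r (Wn K a N)); [lra|].
    replace (ln (INR N) * / Wn K a N * Vn K a N * Wn K a N) with (ln (INR N) * Vn K a N) by (field; lra).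
    unfold Wn. nra. }
  nra.
Qed.

Lemma combos_bound t pd n : In pd (combos t) -> Rabs (snd pd n) <= 1.
Proof.
  intro H. unfold combos in H. simpl in H.
  assert (Cb := COS_bound (2 * PI * INR n * t)). assert (Sb := SIN_bound (2 * PI * INR n * t)).
  repeat (destruct H as [<-|H]; [cbn [snd]; unfold ccos, csin; apply Rabs_le; lra|]). destruct H.
Qed.

Lemma ExL_U_bound sg K a N w :
  (forall k, (1 <= k)%nat -> 0 <= sg k <= 1) -> 0 < a < 1/2 -> 0 <= K ->
  (forall k, (1 <= k)%nat -> sg k <= K * Rpower (INR k) (- a)) ->
  (2 <= N)%nat ->
  ExL sg (seq 1 N) (U sg K a N) w <= 72 / (INR N * (INR N - 1)).
Proof.
  intros Hs Ha HK HsK HN. unfold U. rewrite ExL_lsum.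
  eapply Rle_trans.
  { apply (lsum_const_le _ _ (INR (S (Gn N)) * (INR 8 * / INR N ^ 6))).
    intros m Hm. apply in_seq in Hm. rewrite ExL_lsum.
    eapply Rle_trans; [apply lsum_const_le|rewrite length_seq; apply Rle_refl].
    intros g Hg. rewrite ExL_lsum.
    eapply Rle_trans; [apply lsum_const_le|apply Rle_refl].
    intros pd Hpd.
    apply term_bound; auto; [lia|]. intro n; apply (combos_bound _ _ _ Hpd). }
  rewrite length_seq.
  assert (HN2 : 2 <= INR N) by (apply (le_INR 2); lia).
  assert (HG : INR (S (Gn N)) = 8 * INR N * INR N + 1) by (unfold Gn; rewrite S_INR, !mult_INR; simpl; ring).
  rewrite HG. set (x := INR N) in *. simpl INR.
  replace (x * ((8 * x * x + 1) * ((1 + 1 + 1 + 1 + 1 + 1 + 1 + 1) * / x ^ 6)))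
    with ((64 * x * x + 8) / (x * x * x * x * x)) by (field; lra).
  apply Rle_trans with (72 * x * x / (x * x * x * x * x)).
  - unfold Rdiv. apply Rmult_le_compat_r; [|nra].
    apply Rlt_le, Rinv_0_lt_compat. assert (0 < x * x) by nra. assert (0 < x * x * x) by nra.
    assert (0 < x * x * x * x) by nra. nra.
  - replace (72 * x * x / (x * x * x * x * x)) with (72 / (x * (x * x))) by (field; lra).
    unfold Rdiv. apply Rmult_le_compat_l; [lra|]. apply Rinv_le_contravar; nra.
Qed.

Lemma P_ge1 a N : 0 < a < 1/2 -> (1 <= N)%nat -> 1 <= Rpower (INR N) (1/2 - a).
Proof.
  intros Ha HN. assert (1 <= INR N) by (apply (le_INR 1); lia).
  assert (A : Rpower (INR N) 0 <= Rpower (INR N) (1/2 - a)) by (apply Rle_Rpower; lra).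
  rewrite Rpower_O in A by lra. exact A.
Qed.

Lemma lnN_half N : (2 <= N)%nat -> / 2 < ln (INR N).
Proof.
  intro HN. assert (2 <= INR N) by (apply (le_INR 2); lia).
  eapply Rlt_le_trans; [apply ln_lt_2|]. apply ln_le'; lra.
Qed.

Lemma s_lower N : (2 <= N)%nat -> 2/3 <= sqrt (ln (INR N)).
Proof.
  intro HN. assert (H := lnN_half N HN).
  assert (E := sqrt_sqrt (ln (INR N)) ltac:(lra)).
  assert (0 <= sqrt (ln (INR N))) by apply sqrt_pos. nra.
Qed.

Lemma Ps_lower a N : 0 < a < 1/2 -> (2 <= N)%nat ->
  2/3 <= Rpower (INR N) (1/2 - a) * sqrt (ln (INR N)).
Proof.
  intros Ha HN. assert (A := P_ge1 a N Ha ltac:(lia)). assert (B := s_lower N HN). nra.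
Qed.

Lemma thresh K a : 0 < a < 1/2 -> 0 <= K ->
  exists C0, 0 <= C0 /\ forall N, (2 <= N)%nat ->
    4 * lamn K a N + 2 <= C0 * Rpower (INR N) (1/2 - a) * sqrt (ln (INR N)).
Proof.
  intros Ha HK. set (b := 1 - 2 * a).
  assert (Hb : 0 < b) by (unfold b; lra).
  set (rb := sqrt b). assert (Hrb : 0 < rb) by (apply sqrt_lt_R0; lra).
  assert (Hrb2 : rb * rb = b) by (apply sqrt_sqrt; lra).
  exists (32 * (K + 2) / rb + 3). split.
  { unfold Rdiv. assert (0 < / rb) by (apply Rinv_0_lt_compat; lra). nra. }
  intros N HN.
  set (P := Rpower (INR N) (1/2 - a)). set (s := sqrt (ln (INR N))).
  assert (HN2 : 2 <= INR N) by (apply (le_INR 2); lia).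
  assert (HL := lnN_half N HN).
  assert (HP1 : 1 <= P) by (apply P_ge1; auto; lia).
  assert (Hs1 : 2/3 <= s) by (apply s_lower; auto).
  assert (HPP : P * P = Rpower (INR N) b).
  { unfold P, b. rewrite <- Rpower_plus. replace (1/2 - a + (1/2 - a)) with (1 - 2 * a) by field. reflexivity. }
  assert (Hss : s * s = ln (INR N)) by (apply sqrt_sqrt; lra).
  assert (HbL : b * ln (INR N) <= Rpower (INR N) b).
  { assert (E := exp_ineq1_le (ln (Rpower (INR N) b))).
    rewrite exp_ln in E by apply Rpower_pos'. rewrite ln_Rpower in E. lra. }
  assert (HW : Wn K a N * ln (INR N) <= Rsqr ((K + 2) * P * s / rb)).
  { unfold Wn, Vn, Rsqr. fold b.
    replace ((K + 2) * P * s / rb * ((K + 2) * P * s / rb)) with ((K + 2) ^ 2 * (P * P) * (s * s) / (rb * rb))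
      by (field; lra).
    rewrite Hrb2, HPP, Hss.
    unfold Rdiv.
    assert (0 < / b) by (apply Rinv_0_lt_compat; lra).
    assert (4 * ln (INR N) <= 4 * Rpower (INR N) b * / b).
    { apply (Rmult_le_reg_r b); [lra|].
      replace (4 * Rpower (INR N) b * / b * b) with (4 * Rpower (INR N) b) by (field; lra). lra. }
    assert (0 < Rpower (INR N) b) by apply Rpower_pos'.
    assert (K ^ 2 * Rpower (INR N) b * / b + 4 * ln (INR N) <= (K + 2) ^ 2 * Rpower (INR N) b * / b).
    { assert (0 <= 4 * K * Rpower (INR N) b * / b).
      { apply Rmult_le_pos; [|lra]. apply Rmult_le_pos; lra. }
      replace ((K + 2) ^ 2 * Rpower (INR N) b * / b)
        with (K ^ 2 * Rpower (INR N) b * / b + 4 * K * Rpower (INR N) b * / b + 4 * Rpower (INR N) b * / b)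
        by ring. lra. }
    nra. }
  assert (Hsq : sqrt (Wn K a N * ln (INR N)) <= (K + 2) * P * s / rb).
  { rewrite <- (sqrt_Rsqr ((K + 2) * P * s / rb)).
    - apply sqrt_le_1_alt. exact HW.
    - unfold Rdiv. apply Rmult_le_pos; [|apply Rlt_le, Rinv_0_lt_compat; lra].
      apply Rmult_le_pos; [apply Rmult_le_pos|]; lra. }
  unfold lamn. fold P s.
  replace ((32 * (K + 2) / rb + 3) * P * s) with (32 * ((K + 2) * P * s / rb) + 3 * (P * s)) by (field; lra).
  assert (2/3 <= P * s) by nra.
  lra.
Qed.

Lemma rsum_abs_le f M : (forall n, (1 <= n <= M)%nat -> Rabs (f n) <= 1) -> Rabs (rsum f M) <= INR M.
Proof.
  intro H. assert (A := rsum_diff f (fun _ => 0) M 1).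
  assert (Z : rsum (fun _ => 0) M = 0) by (clear; induction M; simpl; [reflexivity|rewrite IHM; ring]).
  rewrite Z, Rminus_0_r, Rmult_1_r in A. apply A.
  intros n Hn. rewrite Rminus_0_r. apply H; auto.
Qed.

Lemma corr_small sg w N m t :
  (forall k, (1 <= k)%nat -> 0 <= sg k <= 1) -> (1 <= m <= N)%nat ->
  corr_sum_abs sg w N m t <= 2 * INR N.
Proof.
  intros Hs Hm. unfold corr_sum_abs; cbv zeta.
  eapply Rle_trans; [apply sqrt_sum_sq|].
  assert (HMN : INR (N - m) <= INR N) by (apply le_INR; lia).
  assert (G : forall h : R -> R, (forall x, Rabs (h x) <= 1) ->
    Rabs (rsum (fun n => Y sg w (n + m) * Y sg w n * h (2 * PI * INR n * t)) (N - m)) <= INR N).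
  { intros h Hh. eapply Rle_trans; [apply rsum_abs_le|exact HMN].
    intros n Hn. rewrite !Rabs_mult.
    assert (Y1 := Y_bound sg w (n + m) Hs ltac:(lia)).
    assert (Y2 := Y_bound sg w n Hs ltac:(lia)).
    assert (H3 := Hh (2 * PI * INR n * t)).
    assert (0 <= Rabs (Y sg w (n + m))) by apply Rabs_pos.
    assert (0 <= Rabs (Y sg w n)) by apply Rabs_pos.
    assert (0 <= Rabs (h (2 * PI * INR n * t))) by apply Rabs_pos.
    assert (Rabs (Y sg w (n + m)) * Rabs (Y sg w n) <= 1) by nra. nra. }
  assert (A1 := G cos (fun x => ltac:(apply Rabs_le; apply COS_bound))).
  assert (A2 := G sin (fun x => ltac:(apply Rabs_le; apply SIN_bound))).
  lra.
Qed.

Lemma main_K (sigma : nat -> R) (a K : R)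
  (Hsig : forall n : nat, (1 <= n)%nat -> 0 <= sigma n <= 1)
  (Ha : 0 < a < 1 / 2) (HK : 0 <= K)
  (HsK : forall k, (1 <= k)%nat -> sigma k <= K * Rpower (INR k) (- a)) :
  almost_surely sigma (fun omega =>
    exists C : R, forall N : nat, (2 <= N)%nat ->
      forall m : nat, (1 <= m <= N)%nat ->
      forall t : R, 0 <= t <= 1 ->
        corr_sum_abs sigma omega N m t
          <= C * Rpower (INR N) (1 / 2 - a) * sqrt (ln (INR N))).
Proof.
  intros eps Heps.
  destruct (thresh K a Ha HK) as [C0 [HC0 Hth]].
  destruct (INR_unbounded (73 / eps)) as [n0 Hn0].
  set (N0 := (n0 + 2)%nat).
  assert (HN0e : 73 / (INR N0 - 1) <= eps).
  { unfold N0. rewrite plus_INR. simpl INR.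
    assert (0 <= INR n0) by apply pos_INR.
    replace (INR n0 + (1 + 1) - 1) with (INR n0 + 1) by ring.
    apply (Rmult_le_reg_r (INR n0 + 1)); [lra|].
    replace (73 / (INR n0 + 1) * (INR n0 + 1)) with 73 by (field; lra).
    assert (73 / eps * eps = 73) by (field; lra).
    nra. }
  destruct (cover_assembly sigma (Bset sigma K a) N0 eps Hsig ltac:(unfold N0; lia)) as [cover [Hcov Hsum]].
  - intros N w [m [Hm [t [Ht Hc]]]]. exists m; split; [exact Hm|]. exists t; split; [exact Ht|].
    rewrite corr_glue by lia. exact Hc.
  - intros N HN. eapply Rle_trans; [|apply (ExL_U_bound sigma K a N w0); auto; unfold N0 in HN; lia].
    apply ExL_mono.
    + intros i Hi; apply in_seq in Hi; apply Hsig; lia.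
    + intro w. apply ind_le_U; auto. unfold N0 in HN; lia.
  - exact HN0e.
  - exists cover. split; [|exact Hsum].
    intros w Hbad. apply Hcov.
    destruct (classic (exists N, (N0 <= N)%nat /\ Bset sigma K a N w)) as [H|H]; [exact H|].
    exfalso. apply Hbad. exists (C0 + 3 * INR N0).
    intros N HN m Hm t Ht.
    assert (HPs := Ps_lower a N Ha HN).
    set (P := Rpower (INR N) (1 / 2 - a)) in *. set (s := sqrt (ln (INR N))) in *.
    assert (HN0p : 0 <= INR N0) by apply pos_INR.
    replace ((C0 + 3 * INR N0) * P * s) with (C0 * P * s + 3 * INR N0 * (P * s)) by ring.
    assert (0 <= C0 * P * s) by (rewrite Rmult_assoc; apply Rmult_le_pos; lra).
    assert (0 <= 3 * INR N0 * (P * s)) by (apply Rmult_le_pos; lra).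
    destruct (le_lt_dec N0 N) as [HNN|HNN].
    + assert (nB : ~ (4 * lamn K a N + 2 < corr_sum_abs sigma w N m t)).
      { intro Hc. apply H. exists N. split; [exact HNN|]. exists m; split; [exact Hm|].
        exists t; split; [exact Ht|exact Hc]. }
      apply Rnot_lt_le in nB. assert (T := Hth N HN). fold P s in T. lra.
    + assert (Cs := corr_small sigma w N m t Hsig Hm).
      assert (INR N <= INR N0) by (apply le_INR; lia).
      assert (2 * INR N0 <= 3 * INR N0 * (P * s)) by nra.
      lra.
Qed.

Lemma K_exists (sigma : nat -> R) (a L : R)
  (Hsig : forall n : nat, (1 <= n)%nat -> 0 <= sigma n <= 1)
  (Ha : 0 < a < 1 / 2)
  (Hasym : Un_cv (fun n : nat => sigma (S n) / Rpower (INR (S n)) (- a)) L) :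
  exists K, 0 <= K /\ forall k, (1 <= k)%nat -> sigma k <= K * Rpower (INR k) (- a).
Proof.
  destruct (Hasym 1 Rlt_0_1) as [n1 Hn1].
  set (q := Rpower (INR (S n1)) (- a)).
  assert (Hq : 0 < q) by apply Rpower_pos'.
  exists (Rabs L + 1 + / q). split.
  { assert (0 < / q) by (apply Rinv_0_lt_compat; lra). assert (0 <= Rabs L) by apply Rabs_pos. lra. }
  intros k Hk. destruct k as [|n]; [lia|].
  assert (Hp := Rpower_pos' (INR (S n)) (- a)).
  assert (0 < / q) by (apply Rinv_0_lt_compat; lra). assert (0 <= Rabs L) by apply Rabs_pos.
  destruct (le_lt_dec n1 n) as [Hc|Hc].
  - specialize (Hn1 n ltac:(lia)). unfold R_dist in Hn1. apply Rabs_def2 in Hn1.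
    assert (Hb : sigma (S n) / Rpower (INR (S n)) (- a) < Rabs L + 1).
    { assert (L <= Rabs L) by apply RRle_abs. lra. }
    assert (sigma (S n) < (Rabs L + 1) * Rpower (INR (S n)) (- a)).
    { apply (Rmult_lt_compat_r (Rpower (INR (S n)) (- a))) in Hb; [|lra].
      unfold Rdiv in Hb. rewrite Rmult_assoc, Rinv_l in Hb by lra. lra. }
    assert (0 <= / q * Rpower (INR (S n)) (- a)) by nra. nra.
  - assert (Hqle : q <= Rpower (INR (S n)) (- a)).
    { unfold q. apply Rpower_base_anti; [apply lt_0_INR; lia|apply le_INR; lia|lra]. }
    assert (1 <= / q * Rpower (INR (S n)) (- a)).
    { apply (Rmult_le_reg_l q); [lra|]. rewrite <- Rmult_assoc, Rinv_r by lra. lra. }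
    destruct (Hsig (S n) ltac:(lia)).
    assert (0 <= (Rabs L + 1) * Rpower (INR (S n)) (- a)) by nra. nra.
Qed.

Theorem proposition3p2 (sigma : nat -> R) (a L : R)
  (Hsig : forall n : nat, (1 <= n)%nat -> 0 <= sigma n <= 1)
  (Ha : 0 < a < 1 / 2)
  (HL : L <> 0)
  (Hasym : Un_cv (fun n : nat => sigma (S n) / Rpower (INR (S n)) (- a)) L) :
  almost_surely sigma (fun omega =>
    exists C : R, forall N : nat, (2 <= N)%nat ->
      forall m : nat, (1 <= m <= N)%nat ->
      forall t : R, 0 <= t <= 1 ->
        corr_sum_abs sigma omega N m t
          <= C * Rpower (INR N) (1 / 2 - a) * sqrt (ln (INR N))).
Proof.
  destruct (K_exists sigma a L Hsig Ha Hasym) as [K [HK HsK]].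
  apply (main_K sigma a K Hsig Ha HK HsK).
Qed.
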